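(* Let $H$ be a separable complex Hilbert space, $(\Omega,\mu)$ a measure space with positive measure, let $K\in B(H)$ have closed range, and let $F:\Omega\to H$ be a Parseval continuous $K$-frame of $H$ with a dual continuous $K$-Bessel sequence $G$. Then $G$ is the canonical dual continuous $K$-Bessel sequence $K^{\dagger}F$ of $F$ if and only if $T_G^{\ast}T_G=T_G^{\ast}T_{Q}$ for every dual continuous $K$-Bessel sequence $Q$ of $F$, where $T_G$ and $T_Q$ denote the analysis operators of $G$ and $Q$.
   Context: A map $F:\Omega\to H$ is weakly measurable if $\omega\mapsto\langle f,F(\omega)\rangle$ is measurable for every $f\in H$. A continuous Bessel sequence is a weakly measurable $G$ with $\int_\Omega|\langle f,G(\omega)\rangle|^2\,d\mu(\omega)\le B\|f\|^2$ for all $f\in H$, for some $B>0$; its analysis operator is $T_G:H\to L^2(\Omega,\mu)$, $T_Gf=\{\langle f,G(\omega)\rangle\}_{\omega}$. A Parseval continuous $K$-frame is a weakly measurable $F$ with $\int_\Omega|\langle f,F(\omega)\rangle|^2\,d\mu(\omega)=\|K^{\ast}f\|^2$ for all $f\in H$. A dual continuous $K$-Bessel sequence of $F$ is a continuous Bessel sequence $G$ with $Kf=\int_\Omega\langle f,G(\omega)\rangle F(\omega)\,d\mu(\omega)$ for all $f\in H$. $K^{\dagger}$ is the Moore–Penrose pseudo-inverse of $K$; the canonical dual continuous $K$-Bessel sequence of $F$ is $K^{\dagger}F$, which is a dual continuous $K$-Bessel sequence of $F$ whose analysis operator has minimal norm among all such duals. (The paper uses the letter $H$ both for the Hilbert space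 and for the arbitrary dual; here the arbitrary dual is called $Q$.) *)

(* Defs.v *)
From HB Require Import structures.
From mathcomp Require Import all_boot all_order all_algebra.
From mathcomp Require Import all_classical all_reals all_analysis.
From mathcomp Require Import complex.
Set Implicit Arguments. Unset Strict Implicit. Unset Printing Implicit Defensive.
Import Order.TTheory GRing.Theory Num.Theory.
Local Open Scope ring_scope.
Local Open Scope classical_set_scope.

Section Hilbert.
Variables (R : realType) (V : lmodType R[i]) (ip : V -> V -> R[i]).

Definition is_inner_product : Prop :=
  [/\ (forall (a : R[i]) (x y z : V), ip (a *: x + y) z = a * ip x z + ip y z),
      (forall x y, ip y x = conjc (ip x y)),
      (forall x, 0 <= ip x x) &
      (forall x, ip x x = 0 -> x = 0)].

Definition hnorm (x : V) : R := Num.sqrt (complex.Re (ip x x)).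

Definition hcomplete : Prop :=
  forall u : nat -> V,
    (forall e : R, 0 < e -> exists N, forall m n, (N <= m)%N -> (N <= n)%N ->
        hnorm (u m - u n) < e) ->
    exists l : V, forall e : R, 0 < e -> exists N, forall n, (N <= n)%N ->
        hnorm (u n - l) < e.

Definition is_hilbert : Prop := is_inner_product /\ hcomplete.

Definition hseparable : Prop :=
  exists D : nat -> V, forall (x : V) (e : R), 0 < e -> exists n, hnorm (x - D n) < e.

Definition bounded_op (K : V -> V) : Prop :=
  (forall (a : R[i]) x y, K (a *: x + y) = a *: K x + K y) /\
  exists M : R, forall x, hnorm (K x) <= M * hnorm x.

Definition closed_range (K : V -> V) : Prop :=
  forall (u : nat -> V) (l : V), (forall n, exists x, u n = K x) ->
    (forall e : R, 0 < e -> exists N, forall n, (N <= n)%N -> hnorm (u n - l) < e) ->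
    exists x, l = K x.

Definition is_adjoint (K Kadj : V -> V) : Prop :=
  bounded_op Kadj /\ forall x y, ip (K x) y = ip x (Kadj y).

Definition is_MP_inverse (K Kdag : V -> V) : Prop :=
  [/\ bounded_op Kdag,
      (forall x, K (Kdag (K x)) = K x),
      (forall x, Kdag (K (Kdag x)) = Kdag x),
      (forall x y, ip (K (Kdag x)) y = ip x (K (Kdag y))) &
      (forall x y, ip (Kdag (K x)) y = ip x (Kdag (K y)))].

Section Meas.
Variables (d : measure_display) (T : measurableType d)
          (mu : {measure set T -> \bar R}).

Definition cabs2 (z : R[i]) : R := complex.Re z ^+ 2 + complex.Im z ^+ 2.

Definition cint (g : T -> R[i]) : R[i] :=
  Complex (Rintegral mu setT (fun w => complex.Re (g w)))
          (Rintegral mu setT (fun w => complex.Im (g w))).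

Definition weakly_measurable (F : T -> V) : Prop :=
  forall f : V, measurable_fun setT (fun w => complex.Re (ip f (F w))) /\
                measurable_fun setT (fun w => complex.Im (ip f (F w))).

Definition cBessel (G : T -> V) : Prop :=
  weakly_measurable G /\
  exists B : R, 0 < B /\ forall f : V,
    (\int[mu]_w ((cabs2 (ip f (G w)))%:E) <= (B * hnorm f ^+ 2)%:E)%E.

Definition parseval_cKframe (Kadj : V -> V) (F : T -> V) : Prop :=
  weakly_measurable F /\
  forall f : V, (\int[mu]_w ((cabs2 (ip f (F w)))%:E) = (hnorm (Kadj f) ^+ 2)%:E)%E.

(* G is a dual continuous K-Bessel sequence of F:
   K f = \int <f,G w> F w dmu (weakly), i.e. <K f, h> = \int <f,G w><F w,h> dmu *)
Definition dual_cKBessel (K : V -> V) (F G : T -> V) : Prop :=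
  cBessel G /\
  forall f h : V, ip (K f) h = cint (fun w => ip f (G w) * ip (F w) h).

(* <T_A^* T_B f, g> = <T_B f, T_A g>_{L^2} = \int <f,B w> conj<g,A w> dmu *)
Definition TstarT_form (A B : T -> V) (f g : V) : R[i] :=
  cint (fun w => ip f (B w) * conjc (ip g (A w))).

End Meas.
End Hilbert.

(* Main.v *)
Require Import Defs.
From HB Require Import structures.
From mathcomp Require Import all_boot all_order all_algebra.
From mathcomp Require Import all_classical all_reals all_analysis.
From mathcomp Require Import complex.
From mathcomp Require Import ring lra.
From mathcomp Require Import measurable_realfun.
Set Implicit Arguments. Unset Strict Implicit. Unset Printing Implicit Defensive.
Import Order.TTheory GRing.Theory Num.Theory.
Local Open Scope ring_scope.
Local Open Scope classical_set_scope.
Local Open Scope complex_scope.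
Section C.
Variable R : realType.
Implicit Types z w : R[i].

Ltac cx := repeat match goal with z : _ |- _ => lazymatch type of z with complex _ => destruct z end end;
  apply/eqP; rewrite eq_complex /=; apply/andP; split; apply/eqP.

Lemma conjcM' z w : conjc (z * w) = conjc z * conjc w.
Proof. cx; ring. Qed.
Lemma conjcD' z w : conjc (z + w) = conjc z + conjc w.
Proof. cx; ring. Qed.
Lemma mul_conj z : z * conjc z = (cabs2 z)%:C.
Proof. rewrite /cabs2; cx; ring. Qed.
Lemma conjcK' z : conjc (conjc z) = z.
Proof. cx; ring. Qed.
Lemma cabs2_ge0 z : 0 <= cabs2 z.
Proof. rewrite /cabs2; case: z => a b /=; nra. Qed.
Lemma cabs2_eq0 z : cabs2 z = 0 -> z = 0.
Proof. rewrite /cabs2; case: z => a b /= h. 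
have ha : a = 0 by nra. have hb : b = 0 by nra. by rewrite ha hb. Qed.
Lemma ReC (r : R) : complex.Re (r%:C) = r. Proof. by []. Qed.
Lemma ImC (r : R) : complex.Im (r%:C) = 0. Proof. by []. Qed.

Lemma small_inv (eps : R) : 0 < eps -> exists N : nat, forall n, (N <= n)%N -> n.+1%:R^-1 < eps.
Proof.
move=> e0; exists (Num.Def.trunc (1 / eps)) => n hn.
have h1 := truncnS_gt (1 / eps).
have h2 : (Num.Def.trunc (1 / eps)).+1%:R <= n.+1%:R :> R by rewrite ler_nat ltnS.
have h3 : 1 / eps < n.+1%:R by apply: lt_le_trans h1 h2.
rewrite ltr_pdivrMr // in h3.
rewrite -[_^-1]mul1r ltr_pdivrMr ?ltr0n //.
by rewrite mulrC.
Qed.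

Lemma ReD z w : complex.Re (z + w) = complex.Re z + complex.Re w. Proof. by case: z w => ? ? [? ?]. Qed.
Lemma ImD z w : complex.Im (z + w) = complex.Im z + complex.Im w. Proof. by case: z w => ? ? [? ?]. Qed.
Lemma ReN z : complex.Re (- z) = - complex.Re z. Proof. by case: z. Qed.
Lemma ImN z : complex.Im (- z) = - complex.Im z. Proof. by case: z. Qed.
Lemma ReM z w : complex.Re (z * w) = complex.Re z * complex.Re w - complex.Im z * complex.Im w.
Proof. by case: z w => ? ? [? ?]. Qed.
Lemma ImM z w : complex.Im (z * w) = complex.Re z * complex.Im w + complex.Im z * complex.Re w.
Proof. by case: z w => ? ? [? ?] /=; rewrite addrC. Qed.
Lemma Re_mulJ z w : complex.Re (z * conjc w) = complex.Re z * complex.Re w + complex.Im z * complex.Im w.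
Proof. by case: z w => a b [c e] /=; ring. Qed.
Lemma Im_mulJ z w : complex.Im (z * conjc w) = complex.Im z * complex.Re w - complex.Re z * complex.Im w.
Proof. by case: z w => a b [c e] /=; ring. Qed.
Lemma cabs2E z : cabs2 z = complex.Re z ^+ 2 + complex.Im z ^+ 2. Proof. by []. Qed.
End C.

Section IP.
Variables (R : realType) (V : lmodType R[i]) (ip : V -> V -> R[i]).
Hypothesis hip : is_inner_product ip.

Ltac cx := repeat match goal with z : _ |- _ => lazymatch type of z with complex _ => destruct z end end;
  apply/eqP; rewrite eq_complex /=; apply/andP; split; apply/eqP.

Lemma ipLin a x y z : ip (a *: x + y) z = a * ip x z + ip y z.
Proof. by case: hip. Qed.
Lemma ipC x y : ip y x = conjc (ip x y).
Proof. by case: hip. Qed.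
Lemma ip0l z : ip 0 z = 0.
Proof. have := ipLin 1 0 0 z; rewrite scaler0 addr0 mul1r => h.
by have := congr1 (fun t => t - ip 0 z) h; rewrite addrK subrr. Qed.
Lemma ipDl x y z : ip (x + y) z = ip x z + ip y z.
Proof. by have := ipLin 1 x y z; rewrite scale1r mul1r. Qed.
Lemma ipZl a x z : ip (a *: x) z = a * ip x z.
Proof. by rewrite -[a *: x]addr0 ipLin ip0l addr0. Qed.
Lemma ipNl x z : ip (- x) z = - ip x z.
Proof. by rewrite -scaleN1r ipZl mulN1r. Qed.
Lemma ipBl x y z : ip (x - y) z = ip x z - ip y z.
Proof. by rewrite ipDl ipNl. Qed.
Lemma ip0r z : ip z 0 = 0.
Proof. by rewrite ipC ip0l conjc0. Qed.
Lemma ipDr x y z : ip z (x + y) = ip z x + ip z y.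
Proof. by rewrite ipC ipDl conjcD' -!ipC. Qed.
Lemma ipZr a x z : ip z (a *: x) = conjc a * ip z x.
Proof. by rewrite ipC ipZl conjcM' -ipC. Qed.
Lemma ipNr x z : ip z (- x) = - ip z x.
Proof. rewrite ipC ipNl (ipC z x). case: (ip z x) => a b; cx; ring. Qed.
Lemma ipBr x y z : ip z (x - y) = ip z x - ip z y.
Proof. by rewrite ipDr ipNr. Qed.

Definition nrm x := complex.Re (ip x x).
Lemma ip_self x : ip x x = (nrm x)%:C.
Proof. case: hip => _ _ /(_ x) + _; rewrite /nrm.
case: (ip x x) => a b; rewrite lecE /= => /andP[/eqP hb _]. by rewrite hb. Qed.
Lemma nrm_ge0 x : 0 <= nrm x.
Proof. case: hip => _ _ /(_ x) + _; rewrite lecE /nrm => /andP[_ ->]. by []. Qed.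
Lemma nrm_eq0 x : nrm x = 0 -> x = 0.
Proof. move=> h; case: hip => _ _ _; apply; by rewrite ip_self h. Qed.
Lemma hnorm_sq x : hnorm ip x ^+ 2 = nrm x.
Proof. by rewrite /hnorm sqr_sqrtr // nrm_ge0. Qed.
Lemma hnorm_ge0 x : 0 <= hnorm ip x.
Proof. exact: sqrtr_ge0. Qed.
Lemma hnorm_lt x e : 0 < e -> nrm x < e ^+ 2 -> hnorm ip x < e.
Proof. move=> e0 h. rewrite -(ltr_pXn2r (_ : 0 < 2)%N) ?hnorm_sq //; 
  rewrite ?nnegrE ?hnorm_ge0 ?ltW //. Qed.

Lemma ip_expand a b x y : ip (a *: x + b *: y) (a *: x + b *: y) =
  a * conjc a * ip x x + a * conjc b * ip x y + b * conjc a * ip y x + b * conjc b * ip y y.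
Proof. rewrite !ipDl !ipDr !ipZl !ipZr; ring. Qed.

Lemma nrmD x y : nrm (x + y) = nrm x + nrm y + 2 * complex.Re (ip x y).
Proof. rewrite /nrm !ipDl !ipDr (ipC x y).
case: (ip x x) (ip y y) (ip x y) => ? ? [? ?] [? ?] /=; ring. Qed.

Lemma CS x y : cabs2 (ip x y) <= nrm x * nrm y.
Proof.
have [y0|ny] := eqVneq (nrm y) 0.
  move/nrm_eq0: y0 => ->; rewrite ip0r /nrm ip0r /cabs2 /=; lra.
have ny0 : 0 < nrm y by rewrite lt_def ny nrm_ge0.
have := nrm_ge0 ((nrm y)%:C *: x + (- ip x y) *: y).
rewrite /nrm ip_expand (ipC x y) !ip_self.
have -> : complex.Re ((nrm y)%:C * (nrm y)%:C^* * (nrm x)%:C +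
     (nrm y)%:C * (- ip x y)^* * ip x y + - ip x y * (nrm y)%:C^* * (ip x y)^* +
     - ip x y * (- ip x y)^* * (nrm y)%:C) = nrm y * (nrm y * nrm x - cabs2 (ip x y)).
  rewrite /cabs2; case: (ip x y) => a b /=; ring.
rewrite pmulr_rge0 // subr_ge0 mulrC //.
Qed.

Lemma ip_inj a b : (forall x, ip x a = ip x b) -> a = b.
Proof. move=> h; apply/eqP; rewrite -subr_eq0; apply/eqP; apply: nrm_eq0.
by rewrite /nrm ipBr h subrr. Qed.

Lemma hnormD x y : hnorm ip (x + y) <= hnorm ip x + hnorm ip y.
Proof.
have hx := hnorm_ge0 x; have hy := hnorm_ge0 y; have hxy := hnorm_ge0 (x + y).
have cs := CS x y.
have e1 : hnorm ip (x + y) ^+ 2 = hnorm ip x ^+ 2 + hnorm ip y ^+ 2 + 2 * complex.Re (ip x y).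
  by rewrite !hnorm_sq nrmD.
rewrite -!hnorm_sq in cs.
move: cs e1; rewrite /cabs2; case: (ip x y) => a b /= cs e1.
rewrite -exprMn in cs.
have p0 := mulr_ge0 hx hy.
have ha : a <= hnorm ip x * hnorm ip y.
  move: (hnorm ip x * hnorm ip y) p0 cs => p p0 cs; nra.
rewrite -(ler_pXn2r (_ : (0 < 2)%N)) ?nnegrE ?addr_ge0 //.
rewrite e1; nra.
Qed.

Lemma nrmN x : nrm (- x) = nrm x.
Proof. by rewrite /nrm ipNl ipNr opprK. Qed.
Lemma hnormN x : hnorm ip (- x) = hnorm ip x.
Proof. by rewrite /hnorm -/(nrm _) nrmN. Qed.
Lemma nrmZ a x : nrm (a *: x) = cabs2 a * nrm x.
Proof. rewrite /nrm ipZl ipZr mulrA ip_self /cabs2; case: a => p q /=; ring. Qed.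
Lemma nrmB x y : nrm (x - y) = nrm x + nrm y - 2 * complex.Re (ip x y).
Proof. rewrite nrmD nrmN ipNr. case: (ip x y) => p q /=; ring. Qed.
Lemma para u v : nrm (u + v) + nrm (u - v) = 2 * nrm u + 2 * nrm v.
Proof. rewrite nrmD nrmB; ring. Qed.
Lemma hnorm_le_sq x y : hnorm ip x <= hnorm ip y -> nrm x <= nrm y.
Proof. move=> h; rewrite -!hnorm_sq. have := hnorm_ge0 x. nra. Qed.
Lemma nrm_lt_of t : 0 < t -> exists2 e, 0 < e & forall x, hnorm ip x < e -> nrm x < t.
Proof.
move=> t0; exists (Num.min t 1); first by rewrite lt_min t0 ltr01.
move=> x hx; rewrite -hnorm_sq.
have h0 := hnorm_ge0 x.
have e1 : Num.min t 1 <= t by rewrite ge_min lexx.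
have e2 : Num.min t 1 <= 1 by rewrite ge_min lexx orbT.
nra.
Qed.
End IP.

Section Riesz.
Variables (R : realType) (V : lmodType R[i]) (ip : V -> V -> R[i]).
Hypothesis hip : is_inner_product ip.
Hypothesis hc : hcomplete ip.
Local Notation nrm := (nrm ip).
Local Notation hn := (hnorm ip).

Lemma lra_h1 (a b c1 del eps q : R) : c1 < eps / 2 -> q < eps / 2 -> b < del + q -> a <= b + c1 -> a <= del + eps.
Proof. move=> *; lra. Qed.

Lemma riesz (phi : V -> R[i]) (M : R) :
  (forall a x y, phi (a *: x + y) = a * phi x + phi y) ->
  (forall x, cabs2 (phi x) <= M * nrm x) ->
  exists h, forall x, phi x = ip x h.
Proof.
move=> lin bd.
have phi0 : phi 0 = 0.
  have := lin 1 0 0; rewrite scaler0 addr0 mul1r => h.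
  by have := congr1 (fun t => t - phi 0) h; rewrite addrK subrr.
have phiD x y : phi (x + y) = phi x + phi y.
  by have := lin 1 x y; rewrite scale1r mul1r.
have phiZ a x : phi (a *: x) = a * phi x.
  by rewrite -[a *: x]addr0 lin phi0 addr0.
have phiB x y : phi (x - y) = phi x - phi y.
  by rewrite -scaleN1r phiD phiZ mulN1r.
have [[z hz]|none] := pselect (exists z, phi z != 0); last first.
  exists 0 => x; rewrite ip0r //; apply/eqP; apply/negP => /negP h.
  by apply: none; exists x.
pose S := [set r | exists n, phi n = 0 /\ r = hn (z - n)].
have Sne : S (hn (z - 0)) by exists 0.
have Slb : has_lbound S by exists 0 => r [n [_ ->]]; exact: hnorm_ge0.
have Sinf : has_inf S by split => //; exists (hn (z - 0)).
pose del := inf S.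
have del_le n : phi n = 0 -> del <= hn (z - n).
  by move=> pn; apply: (ge_inf Slb); exists n.
have del0 : 0 <= del.
  apply: lb_le_inf; first by exists (hn (z - 0)).
  by move=> r [n [_ ->]]; exact: hnorm_ge0.
have sq k : exists n, phi n = 0 /\ hn (z - n) < del + k.+1%:R^-1.
  have ek : 0 < k.+1%:R^-1 :> R by rewrite invr_gt0 ltr0n.
  have [r [n [pn ->]] hr] := inf_adherent ek Sinf.
  by exists n.
have [ns hns] := choice sq.
pose c := 2 * (2 * del + 1).
have epsk k : 0 < k.+1%:R^-1 :> R by rewrite invr_gt0 ltr0n.
have epsk1 k : k.+1%:R^-1 <= 1 :> R by rewrite invf_le1 ?ler1n ?ltr0n.
have nrm_ns k : nrm (z - ns k) <= del ^+ 2 + (2 * del + 1) * k.+1%:R^-1.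
  have [_ h] := hns k. have h0 := hnorm_ge0 ip (z - ns k).
  rewrite -hnorm_sq //. have := epsk k. have := epsk1 k.
  move: (k.+1%:R^-1) h => e h e1 e0.
  have : hn (z - ns k) ^+ 2 <= (del + e) ^+ 2 by nra.
  nra.
have cauchy j k : nrm (ns k - ns j) <= c * (j.+1%:R^-1 + k.+1%:R^-1).
  pose m := 2^-1 *: (ns j + ns k).
  have pm : phi m = 0 by rewrite phiZ phiD (hns j).1 (hns k).1 addr0 mulr0.
  have hm := hnorm_le_sq hip (_ : hn 0 <= hn (z - m)).
  have e1 : (z - ns j) + (z - ns k) = 2 *: (z - m).
    rewrite /m scalerBr scalerA mulfV ?scale1r ?pnatr_eq0 //.
    rewrite scaler_nat mulr2n. 
    by rewrite opprD !addrA; congr (_ + _); rewrite -!addrA; congr (_ + _); rewrite addrC.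
  have e2 : (z - ns j) - (z - ns k) = ns k - ns j.
    by rewrite opprB addrC addrA subrK.
  have := para hip (z - ns j) (z - ns k).
  rewrite e1 e2 nrmZ //.
  have -> : cabs2 2 = 4 :> R by rewrite /cabs2 /=; lra.
  have hzm := del_le m pm. have h0 := hnorm_ge0 ip (z - m).
  have : del ^+ 2 <= nrm (z - m) by rewrite -hnorm_sq //; nra.
  have := nrm_ns j; have := nrm_ns k. rewrite /c. move: (j.+1%:R^-1) (k.+1%:R^-1) (2 * del + 1) => ej ek q. nra.
have c0 : 0 < c by rewrite /c; nra.
have ninv_le m n : (n <= m)%N -> m.+1%:R^-1 <= n.+1%:R^-1 :> R.
  by move=> h; rewrite lef_pV2 ?posrE ?ltr0n // ler_nat ltnS.
have cs : forall e, 0 < e -> exists N, forall m n, (N <= m)%N -> (N <= n)%N ->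
    hn (ns m - ns n) < e.
  move=> e e0.
  have e20 : 0 < e ^+ 2 / (2 * c) by rewrite divr_gt0 ?exprn_gt0 // mulr_gt0.
  have [N hN] := small_inv e20.
  exists N => m n hm hn'; apply: hnorm_lt => //.
  have := cauchy n m; have := hN N (leqnn N).
  have := ninv_le _ _ hm; have := ninv_le _ _ hn'.
  rewrite ltr_pdivlMr; last by apply: mulr_gt0.
  move: (m.+1%:R^-1) (n.+1%:R^-1) (N.+1%:R^-1) => a b q. nra.
have [l hl] := hc (u := ns) cs.
pose M' := `|M| + 1.
have M'0 : 0 < M' by rewrite /M'; have := normr_ge0 M; lra.
have bd' x : cabs2 (phi x) <= M' * nrm x.
  apply: le_trans (bd x) _; apply: ler_wpM2r; first exact: nrm_ge0.
  rewrite /M'; have := ler_norm M; lra.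
have pl : phi l = 0.
  apply: cabs2_eq0; apply/eqP; rewrite eq_le cabs2_ge0 andbT; apply/negP => /negP.
  rewrite -ltNge => cpos.
  have t0 : 0 < cabs2 (phi l) / M' by rewrite divr_gt0.
  have [e e0 he] := nrm_lt_of hip t0.
  have [N hN] := hl e e0.
  have h1 := he _ (hN N (leqnn N)).
  have := bd' (l - ns N); rewrite phiB (hns N).1 subr0 -nrmN // opprB.
  rewrite ltr_pdivlMr // in h1. move=> h2. 
  have : M' * nrm (ns N - l) < cabs2 (phi l) by rewrite mulrC.
  lra.
have hzl : hn (z - l) <= del.
  suff E : forall eps : R, 0 < eps -> hn (z - l) <= del + eps by apply/ler_addgt0Pr.
  move=> eps eps0.
  have eps2 : 0 < eps / 2 by rewrite divr_gt0.
  have [N1 hN1] := hl _ eps2.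
  have [N2 hN2] := small_inv eps2.
  pose k := maxn N1 N2.
  have h1 := hN1 k (leq_maxl _ _).
  have h2 := hN2 k (leq_maxr _ _).
  have h3 := (hns k).2.
  have : hn (z - l) <= hn (z - ns k) + hn (ns k - l).
    by have := hnormD hip (z - ns k) (ns k - l); rewrite addrA subrK.
  exact: lra_h1 h1 h2 h3.
pose w := z - l.
have orth n : phi n = 0 -> ip w n = 0.
  move=> pn.
  pose s := (nrm n + 1)^-1.
  have n0 := nrm_ge0 hip n.
  have s0 : 0 < s by rewrite /s invr_gt0; lra.
  have sn : s * nrm n < 1.
    have n1 : 0 < nrm n + 1 by lra.
    by rewrite /s mulrC ltr_pdivrMr // mul1r; lra.
  pose t := s%:C * ip w n.
  have p2 : phi (l + t *: n) = 0 by rewrite phiD phiZ pn pl; rewrite mulr0 addr0.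
  have h1 := del_le _ p2.
  have e0 : z - (l + t *: n) = w - t *: n by rewrite /w opprD addrA.
  rewrite e0 in h1.
  have h2 : hn w <= hn (w - t *: n) := le_trans hzl h1.
  have h3 := hnorm_le_sq hip h2.
  have : nrm (w - t *: n) = nrm w - s * cabs2 (ip w n) * (2 - s * nrm n).
    have -> : w - t *: n = 1 *: w + (- t) *: n by rewrite scale1r scaleNr.
    rewrite /nrm ip_expand // (ipC hip w n) !ip_self //.
    rewrite /t /cabs2 -!complexr0. case: (ip w n) => a b /=. ring.
  move=> e; rewrite e in h3.
  have ca := cabs2_ge0 (ip w n).
  apply: cabs2_eq0; apply/eqP; rewrite eq_le ca andbT.
  have : 0 < s * (2 - s * nrm n) by apply: mulr_gt0 => //; lra.
  nra.
have pw : phi w = phi z by rewrite /w phiB pl subr0.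
have nw0 : nrm w != 0.
  apply/negP => /eqP /(nrm_eq0 hip) w0. by move: hz; rewrite -pw w0 phi0 eqxx.
have ipw0 : ip w w != 0 by rewrite ip_self // (inj_eq (@complexI _)).
have pw0 : phi w != 0 by rewrite pw.
exists (conjc (phi w / ip w w) *: w) => x.
rewrite ipZr // conjcK'.
pose n := x - (phi x / phi w) *: w.
have pn : phi n = 0.
  by rewrite /n phiB phiZ -mulrA mulVf // mulr1 subrr.
have := orth n pn; rewrite (ipC hip) /n ipBl // ipZl // => /eqP.
rewrite conjc_eq0 subr_eq0 => /eqP h.
by rewrite h; field; rewrite pw0 ipw0.
Qed.

Lemma adjoint_ex (A : V -> V) : bounded_op ip A ->
  exists B : V -> V, forall x y, ip (A x) y = ip x (B y).
Proof.
move=> [linA [M hM]].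
have ex y : exists h, forall x, ip (A x) y = ip x h.
  apply: (@riesz (fun x => ip (A x) y) (M ^+ 2 * nrm y)).
    by move=> a x x'; rewrite linA ipLin.
  move=> x; apply: le_trans (CS hip _ _) _.
  rewrite mulrAC; apply: ler_wpM2r; first exact: nrm_ge0.
  rewrite -!hnorm_sq // -exprMn.
  have := hM x; have := hnorm_ge0 ip (A x); move: (hnorm ip (A x)) (M * hnorm ip x) => p q.
  move=> p0 pq; nra.
have [B hB] := choice ex.
by exists B => x y; rewrite hB.
Qed.
End Riesz.

Section Cint.
Variables (R : realType) (d : measure_display) (T : measurableType d)
  (mu : {measure set T -> \bar R}).

Definition rint (f : T -> R) := mu.-integrable setT (EFin \o f).
Definition rmeas (f : T -> R) := measurable_fun setT f.
Definition cmeas (g : T -> R[i]) := rmeas (fun w => complex.Re (g w)) /\ rmeas (fun w => complex.Im (g w)).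
Definition cintegrable (g : T -> R[i]) := rint (fun w => complex.Re (g w)) /\ rint (fun w => complex.Im (g w)).
Definition L2f (u : T -> R[i]) := cmeas u /\ (\int[mu]_w ((cabs2 (u w))%:E) < +oo)%E.

Lemma rint_ext f g : rint f -> (forall w, f w = g w) -> rint g.
Proof. by move=> hf h; rewrite /rint -(funext h). Qed.
Lemma rintD f g : rint f -> rint g -> rint (fun w => f w + g w).
Proof. move=> hf hg; exact: (integrableD measurableT hf hg). Qed.
Lemma rintZ k f : rint f -> rint (fun w => k * f w).
Proof. move=> hf; apply: (eq_integrable measurableT _ _ _ (integrableZl measurableT k hf)) => w _ /=; by rewrite EFinM. Qed.
Lemma rintN f : rint f -> rint (fun w => - f w).
Proof. by move=> hf; apply: (eq_integrable measurableT _ _ _ (integrableN hf)) => w _. Qed.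
Lemma rintB f g : rint f -> rint g -> rint (fun w => f w - g w).
Proof. by move=> hf hg; apply: rintD => //; apply: rintN. Qed.

Lemma rint_dom f g : rmeas f -> (forall x, `|f x| <= g x) -> rint g -> rint f.
Proof.
move=> mf fg ig; apply: le_integrable ig => //.
  exact/measurable_EFinP.
move=> x _ /=; rewrite lee_fin; apply: le_trans (fg x) _; exact: ler_norm.
Qed.

Lemma rint_ge0 f : rmeas f -> (forall x, 0 <= f x) ->
  (\int[mu]_w ((f w)%:E) < +oo)%E -> rint f.
Proof.
move=> mf f0 fi; apply/integrableP; split; first exact/measurable_EFinP.
under eq_integral do rewrite /= ger0_norm //.
exact: fi.
Qed.

Lemma rmeas_cabs2 u : cmeas u -> rmeas (fun w => cabs2 (u w)).
Proof. move=> [hr hi]; apply: measurable_funD; exact: measurable_funX. Qed.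

Lemma L2f_rint u : L2f u -> rint (fun w => cabs2 (u w)).
Proof. move=> [mu' fi]; apply: rint_ge0 => //; [exact: rmeas_cabs2 | move=> x; exact: cabs2_ge0]. Qed.

Lemma cmeas_prod u v : cmeas u -> cmeas v -> cmeas (fun w => u w * conjc (v w)).
Proof.
move=> [ur ui] [vr vi]; split.
  rewrite /rmeas (_ : (fun w => _) = (fun w => complex.Re (u w) * complex.Re (v w) + complex.Im (u w) * complex.Im (v w))); last first.
    by apply: funext => w; rewrite Re_mulJ.
  by apply: measurable_funD; apply: measurable_funM.
rewrite /rmeas (_ : (fun w => _) = (fun w => complex.Im (u w) * complex.Re (v w) - complex.Re (u w) * complex.Im (v w))); last first.
  by apply: funext => w; rewrite Im_mulJ.
by apply: measurable_funB; apply: measurable_funM.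
Qed.

Lemma L2_prod u v : L2f u -> L2f v -> cintegrable (fun w => u w * conjc (v w)).
Proof.
move=> hu hv; have [mr mi] := cmeas_prod hu.1 hv.1.
have ig := rintD (L2f_rint hu) (L2f_rint hv).
split; (apply: rint_dom ig => // x); rewrite ?Re_mulJ ?Im_mulJ !cabs2E;
  move: (complex.Re (u x)) (complex.Im (u x)) (complex.Re (v x)) (complex.Im (v x)) => a b c e;
  have := sqr_ge0 (a - c); have := sqr_ge0 (a + c); have := sqr_ge0 (b - e); have := sqr_ge0 (b + e);
  have := sqr_ge0 (b - c); have := sqr_ge0 (b + c); have := sqr_ge0 (a - e); have := sqr_ge0 (a + e);
  rewrite ler_norml; move=> *; apply/andP; split; nra.
Qed.

Local Notation cint := (cint mu).

Lemma cint_ext g1 g2 : (forall w, g1 w = g2 w) -> cint g1 = cint g2.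
Proof. by move=> h; rewrite (funext h). Qed.

Ltac ceq := apply/eqP; rewrite eq_complex /=; apply/andP; split; apply/eqP.

Lemma cintD g1 g2 : cintegrable g1 -> cintegrable g2 ->
  cint (fun w => g1 w + g2 w) = cint g1 + cint g2.
Proof.
move=> [r1 i1] [r2 i2]; rewrite /Defs.cint; ceq.
  rewrite -RintegralD //; apply: eq_Rintegral => w _; exact: ReD.
rewrite -RintegralD //; apply: eq_Rintegral => w _; exact: ImD.
Qed.

Lemma cintZ c g : cintegrable g -> cint (fun w => c * g w) = c * cint g.
Proof.
move=> [r1 i1]; rewrite /Defs.cint; case: c => a b; ceq.
  rewrite -!RintegralZl // -RintegralB //; try exact: rintZ.
  apply: eq_Rintegral => w _; by rewrite ReM.
rewrite -!RintegralZl // -RintegralD //; try exact: rintZ.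
apply: eq_Rintegral => w _; by rewrite ImM.
Qed.

Lemma cintegrableD g1 g2 : cintegrable g1 -> cintegrable g2 -> cintegrable (fun w => g1 w + g2 w).
Proof.
move=> [r1 i1] [r2 i2]; split.
  by apply: rint_ext (rintD r1 r2) _ => w; rewrite ReD.
by apply: rint_ext (rintD i1 i2) _ => w; rewrite ImD.
Qed.

Lemma cintegrableZ c g : cintegrable g -> cintegrable (fun w => c * g w).
Proof.
move=> [r1 i1]; split.
  by apply: rint_ext (rintB (rintZ (complex.Re c) r1) (rintZ (complex.Im c) i1)) _ => w; rewrite ReM.
by apply: rint_ext (rintD (rintZ (complex.Re c) i1) (rintZ (complex.Im c) r1)) _ => w; rewrite ImM.
Qed.

Lemma cintN g : cintegrable g -> cint (fun w => - g w) = - cint g.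
Proof.
move=> h; rewrite -mulN1r -cintZ //; apply: cint_ext => w; by rewrite mulN1r.
Qed.

Lemma cintegrableN g : cintegrable g -> cintegrable (fun w => - g w).
Proof. move=> [r i]; split; [apply: rint_ext (rintN r) _ | apply: rint_ext (rintN i) _] => w; by rewrite ?ReN ?ImN. Qed.

Lemma cintegrableB g1 g2 : cintegrable g1 -> cintegrable g2 -> cintegrable (fun w => g1 w - g2 w).
Proof. by move=> h1 h2; apply: cintegrableD => //; apply: cintegrableN. Qed.

Lemma cmeasB u v : cmeas u -> cmeas v -> cmeas (fun w => u w - v w).
Proof.
move=> [ur ui] [vr vi]; split.
  rewrite /rmeas (_ : (fun w => _) = (fun w => complex.Re (u w) - complex.Re (v w))).
    exact: measurable_funB.
  by apply: funext => w; rewrite ReD ReN.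
rewrite /rmeas (_ : (fun w => _) = (fun w => complex.Im (u w) - complex.Im (v w))).
  exact: measurable_funB.
by apply: funext => w; rewrite ImD ImN.
Qed.

Lemma cintB g1 g2 : cintegrable g1 -> cintegrable g2 ->
  cint (fun w => g1 w - g2 w) = cint g1 - cint g2.
Proof. move=> h1 h2; rewrite cintD ?cintN //; exact: cintegrableN. Qed.

Lemma cint_real r : cint (fun w => (r w)%:C) = (Rintegral mu setT r)%:C.
Proof.
rewrite /Defs.cint /=; congr (Complex _ _).
have -> : Rintegral mu setT (fun w => complex.Im ((r w)%:C)) = Rintegral mu setT (fun _ => 0) by apply: eq_Rintegral.
by rewrite Rintegral_cst // mul0r.
Qed.

Lemma cint_ae g1 g2 : cmeas g1 -> cmeas g2 -> {ae mu, forall w, g1 w = g2 w} -> cint g1 = cint g2.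
Proof.
move=> [m1 n1] [m2 n2] hae; rewrite /Defs.cint; congr (Complex _ _); rewrite /Rintegral; congr fine.
  apply: ae_eq_integral => //; try exact/measurable_EFinP.
  by apply: filterS hae => w /= -> .
apply: ae_eq_integral => //; try exact/measurable_EFinP.
by apply: filterS hae => w /= -> .
Qed.

Lemma Rint0_ae f : rint f -> (forall x, 0 <= f x) -> Rintegral mu setT f = 0 ->
  {ae mu, forall w, f w = 0}.
Proof.
move=> fi f0 h.
have fin := integrable_fin_num measurableT fi.
have e0 : (\int[mu]_x `|(EFin \o f) x| = 0)%E.
  under eq_integral do rewrite /= ger0_norm //.
  by move: h; rewrite /Rintegral => h; rewrite -[LHS]fineK // h.
have := (ae_eq_integral_abs mu measurableT (measurable_int mu fi)).1 e0.
by apply: filterS => w /(_ I) [].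
Qed.
End Cint.

Lemma polar_alg (R : realType) (E : R[i] -> R[i]) (A X Y D : R[i]) :
  (forall c, E c = A + conjc c * X + c * Y + c * conjc c * D) ->
  4 * X = E 1 - E (-1) + 'i * E 'i - 'i * E (- 'i).
Proof.
move=> h; rewrite !h.
move: A X Y D {h} => [a1 a2] [x1 x2] [y1 y2] [d1 d2].
apply/eqP; rewrite eq_complex /=; apply/andP; split; apply/eqP; ring.
Qed.

Section Fam.
Variables (R : realType) (V : lmodType R[i]) (ip : V -> V -> R[i]).
Hypothesis hip : is_inner_product ip.
Variables (d : measure_display) (T : measurableType d) (mu : {measure set T -> \bar R}).
Local Notation cint := (cint mu).

Definition L2fam (X : T -> V) := weakly_measurable ip X /\
  forall f, (\int[mu]_w ((cabs2 (ip f (X w)))%:E) < +oo)%E.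

Lemma L2fam_f X f : L2fam X -> L2f mu (fun w => ip f (X w)).
Proof. by move=> [wm fi]; split => //; exact: wm. Qed.

Lemma bessel_L2 X : cBessel ip mu X -> L2fam X.
Proof.
move=> [wm [B [B0 hB]]]; split => // f.
by apply: le_lt_trans (hB f) _; exact: ltry.
Qed.

Lemma parseval_L2 Kadj F : parseval_cKframe ip mu Kadj F -> L2fam F.
Proof. by move=> [wm hP]; split => // f; rewrite hP ltry. Qed.

Lemma TT_int A B f g : L2fam A -> L2fam B ->
  cintegrable mu (fun w => ip f (B w) * conjc (ip g (A w))).
Proof. move=> hA hB; apply: L2_prod; exact: L2fam_f. Qed.

Lemma polarization Kadj F :
  (forall (a : R[i]) x y, Kadj (a *: x + y) = a *: Kadj x + Kadj y) ->
  parseval_cKframe ip mu Kadj F ->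
  forall u h, cint (fun w => ip u (F w) * conjc (ip h (F w))) = ip (Kadj u) (Kadj h).
Proof.
move=> linK hP u h.
have hF := parseval_L2 hP.
pose S x y := cint (fun w => ip x (F w) * conjc (ip y (F w))).
have SE c : S (u + c *: h) (u + c *: h) =
    S u u + conjc c * S u h + c * S h u + c * conjc c * S h h.
  rewrite /S.
  have hI x y := TT_int x y hF hF.
  pose p x y w := ip x (F w) * conjc (ip y (F w)).
  rewrite (cint_ext mu (g2 := fun w => (p u u w + conjc c * p u h w) + c * p h u w + (c * conjc c) * p h h w)); last first.
    move=> w; rewrite /p ipDl // ipZl //.
    move: (ip u (F w)) (ip h (F w)) => p1 q1.
    case: c p1 q1 => ? ? [? ?] [? ?].
    apply/eqP; rewrite eq_complex /=; apply/andP; split; apply/eqP; ring.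
  have J1 := cintegrableD (hI u u) (cintegrableZ (conjc c) (hI u h)).
  have J2 := cintegrableD J1 (cintegrableZ c (hI h u)).
  rewrite (cintD J2 (cintegrableZ _ (hI h h))) (cintD J1 (cintegrableZ c (hI h u))).
  rewrite (cintD (hI u u) (cintegrableZ _ (hI u h))).
  by rewrite (cintZ _ (hI h h)) (cintZ _ (hI h u)) (cintZ _ (hI u h)).
have TE c : ip (Kadj (u + c *: h)) (Kadj (u + c *: h)) =
    ip (Kadj u) (Kadj u) + conjc c * ip (Kadj u) (Kadj h) + c * ip (Kadj h) (Kadj u)
      + c * conjc c * ip (Kadj h) (Kadj h).
  have -> : Kadj (u + c *: h) = 1 *: Kadj u + c *: Kadj h.
    by rewrite addrC linK scale1r addrC.
  rewrite ip_expand //.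
  rewrite conjc1 !mul1r mulr1. by [].
have diag x : S x x = ip (Kadj x) (Kadj x).
  rewrite /S (cint_ext mu (g2 := fun w => (cabs2 (ip x (F w)))%:C)); last first.
    by move=> w; rewrite mul_conj.
  rewrite cint_real ip_self // /Rintegral (hP.2 x) /= hnorm_sq //.
have e1 := polar_alg SE.
have e2 := polar_alg TE.
rewrite !diag -e2 in e1.
have h4 : (4 : R[i]) != 0.
  by rewrite pnatr_eq0.
by apply: (mulfI h4).
Qed.
End Fam.

Section Dense.
Variables (R : realType) (V : lmodType R[i]) (ip : V -> V -> R[i]).
Hypothesis hip : is_inner_product ip.
Lemma dense_orth (D : nat -> V) v :
  (forall (x : V) (e : R), 0 < e -> exists n, hnorm ip (x - D n) < e) ->
  (forall n, ip (D n) v = 0) -> v = 0.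
Proof.
move=> hD hv; apply: (nrm_eq0 hip); apply/eqP; apply/negP => /negP nz.
have p : 0 < nrm ip v by rewrite lt_def nz nrm_ge0.
have [e e0 he] := nrm_lt_of hip p.
have [n hn] := hD v e e0.
have h1 := he _ hn.
have e2 : ip v v = ip (v - D n) v by rewrite ipBl // hv subr0.
have cs := CS hip (v - D n) v.
rewrite -e2 ip_self // cabs2E /= in cs.
have hn0 := nrm_ge0 hip (v - D n).
move: (nrm ip v) (nrm ip (v - D n)) p h1 cs hn0 => a b pa hab cs hb.
have : a * a <= b * a by move: cs; rewrite expr0n /= addr0 expr2.
nra.
Qed.
End Dense.

Section Main.
Variables (R : realType) (V : lmodType R[i]) (ip : V -> V -> R[i])
  (d : measure_display) (T : measurableType d) (mu : {measure set T -> \bar R})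
  (K Kadj Kdag Kd : V -> V) (F : T -> V).
Hypothesis hip : is_inner_product ip.
Hypothesis hK : bounded_op ip K.
Hypothesis hadj : is_adjoint ip K Kadj.
Hypothesis hMP : is_MP_inverse ip K Kdag.
Hypothesis hP : parseval_cKframe ip mu Kadj F.
Hypothesis hKd : forall x y, ip (Kdag x) y = ip x (Kd y).

Lemma ipKdag f x : ip f (Kdag x) = ip (Kd f) x.
Proof. by rewrite (ipC hip) hKd -(ipC hip). Qed.

Lemma A_wm : weakly_measurable ip (fun w => Kdag (F w)).
Proof.
move=> f; have E w : ip f (Kdag (F w)) = ip (Kd f) (F w) by rewrite ipKdag.
rewrite (funext (fun w : T => congr1 (@complex.Re R) (E w))) (funext (fun w : T => congr1 (@complex.Im R) (E w))).
exact: hP.1.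
Qed.

Lemma FW (A' Q : T -> V) : weakly_measurable ip A' ->
  {ae mu, forall w, A' w = Kdag (F w)} -> dual_cKBessel ip mu K F Q ->
  forall f g, TstarT_form ip mu A' Q f g = ip (Kdag (K f)) g.
Proof.
move=> wmA hae hQ f g.
have wmQ := hQ.1.1.
rewrite /TstarT_form (cint_ae (g2 := fun w => ip f (Q w) * conjc (ip g (Kdag (F w))))).
- rewrite (cint_ext mu (g2 := fun w => ip f (Q w) * ip (F w) (Kd g))); last first.
    by move=> w; rewrite -(ipC hip) hKd.
  by rewrite -hQ.2 hKd.
- apply: cmeas_prod; [exact: wmQ | exact: wmA].
- apply: cmeas_prod; [exact: wmQ | exact: A_wm].
- by apply: filterS hae => w ->.
Qed.
End Main.

Section Main2.
Variables (R : realType) (V : lmodType R[i]) (ip : V -> V -> R[i])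
  (d : measure_display) (T : measurableType d) (mu : {measure set T -> \bar R})
  (K Kadj Kdag Kd : V -> V) (F : T -> V).
Hypothesis hip : is_inner_product ip.
Hypothesis hK : bounded_op ip K.
Hypothesis hadj : is_adjoint ip K Kadj.
Hypothesis hMP : is_MP_inverse ip K Kdag.
Hypothesis hP : parseval_cKframe ip mu Kadj F.
Hypothesis hKd : forall x y, ip (Kdag x) y = ip x (Kd y).

Lemma KadjKd f : Kadj (Kd f) = Kdag (K f).
Proof.
apply: (ip_inj hip) => x; rewrite -hadj.2 -hKd.
by case: hMP => _ _ _ _ ->.
Qed.

Lemma A_dual : dual_cKBessel ip mu K F (fun w => Kdag (F w)).
Proof.
split.
  split; first exact: (A_wm hip hP hKd).
  case: hMP => [[_ [Md hMd]] _ _ _ _].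
  have [_ [Mk hMk]] := hK.
  exists ((`|Md| * `|Mk|) ^+ 2 + 1); split.
    by have := sqr_ge0 (`|Md| * `|Mk|); lra.
  move=> f.
  under eq_integral => w _ do rewrite (ipKdag hip hKd).
  rewrite hP.2 KadjKd lee_fin.
  have h1 := hMd (K f); have h2 := hMk f.
  have a1 := hnorm_ge0 ip (Kdag (K f)); have a2 := hnorm_ge0 ip (K f); have a3 := hnorm_ge0 ip f.
  have b1 : hnorm ip (Kdag (K f)) <= `|Md| * hnorm ip (K f).
    apply: le_trans h1 _; apply: ler_wpM2r => //; exact: ler_norm.
  have b2 : hnorm ip (K f) <= `|Mk| * hnorm ip f.
    apply: le_trans h2 _; apply: ler_wpM2r => //; exact: ler_norm.
  have n1 := normr_ge0 Md; have n2 := normr_ge0 Mk.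
  move: (hnorm ip (Kdag (K f))) (hnorm ip (K f)) (hnorm ip f) (`|Md|) (`|Mk|) a1 a2 a3 b1 b2 n1 n2.
  move=> x y z p q a1 a2 a3 b1 b2 n1 n2.
  have c1 : x <= p * q * z by nra.
  have : x ^+ 2 <= (p * q * z) ^+ 2 by nra.
  have := sqr_ge0 z. nra.
move=> f h.
rewrite (cint_ext mu (g2 := fun w => ip (Kd f) (F w) * conjc (ip h (F w)))); last first.
  by move=> w; rewrite (ipKdag hip hKd) -(ipC hip).
rewrite (polarization hip hadj.1.1 hP) KadjKd -hadj.2.
by case: hMP => _ -> _ _ _.
Qed.

Lemma conv (G : T -> V) (D : nat -> V) :
  (forall (x : V) (e : R), 0 < e -> exists n, hnorm ip (x - D n) < e) ->
  dual_cKBessel ip mu K F G ->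
  (forall Q, dual_cKBessel ip mu K F Q -> forall f g,
     TstarT_form ip mu G G f g = TstarT_form ip mu G Q f g) ->
  {ae mu, forall w, G w = Kdag (F w)}.
Proof.
move=> hD hG H.
pose A := fun w => Kdag (F w).
have hA : dual_cKBessel ip mu K F A := A_dual.
have LG := bessel_L2 hG.1; have LA := bessel_L2 hA.1.
have wmA : weakly_measurable ip A := A_wm hip hP hKd.
have step f : {ae mu, forall w, ip f (G w - A w) = 0}.
  have e1 := H A hA f f.
  have e3 := FW hip hP hKd wmA (aeW _ (fun w => erefl)) hG f f.
  have e4 := FW hip hP hKd wmA (aeW _ (fun w => erefl)) hA f f.
  rewrite /TstarT_form in e1 e3 e4.
  have J1 := TT_int f f LG LG; have J2 := TT_int f f LG LA.
  have J3 := TT_int f f LA LG; have J4 := TT_int f f LA LA.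
  have key : cint mu (fun w => (cabs2 (ip f (G w - A w)))%:C) = 0.
    rewrite (cint_ext mu (g2 := fun w => ((ip f (G w) * conjc (ip f (G w)) - ip f (A w) * conjc (ip f (G w)))
         - ip f (G w) * conjc (ip f (A w))) + ip f (A w) * conjc (ip f (A w)))).
      rewrite (cintD (cintegrableB (cintegrableB J1 J2) J3) J4) (cintB (cintegrableB J1 J2) J3) (cintB J1 J2).
      by rewrite e1 subrr e3 e4 sub0r addNr.
    move=> w; rewrite -mul_conj ipBr //.
    move: (ip f (G w)) (ip f (A w)) => [a b] [c e].
    apply/eqP; rewrite eq_complex /=; apply/andP; split; apply/eqP; ring.
  rewrite cint_real in key.
  have key' : Rintegral mu setT (fun w => cabs2 (ip f (G w - A w))) = 0 by case: key.
  have hint : rint mu (fun w => cabs2 (ip f (G w - A w))).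
    apply: rint_dom (rintD (rintZ 2 (L2f_rint (L2fam_f f LG))) (rintZ 2 (L2f_rint (L2fam_f f LA)))) => [|x].
      apply: rmeas_cabs2.
      rewrite (_ : (fun w => ip f (G w - A w)) = (fun w => ip f (G w) - ip f (A w))); last first.
        by apply: funext => w; rewrite ipBr.
      apply: cmeasB; [exact: hG.1.1 | exact: wmA].
    rewrite ger0_norm ?cabs2_ge0 // ipBr // !cabs2E.
    move: (ip f (G x)) (ip f (A x)) => [a b] [c e] /=.
    have := sqr_ge0 (a + c); have := sqr_ge0 (b + e). nra.
  have := Rint0_ae hint (fun x => cabs2_ge0 _) key'.
  by apply: filterS => w /cabs2_eq0.
have := ae_foralln (fun n => step (D n)).
apply: filterS => w hw.
apply/eqP; rewrite -subr_eq0; apply/eqP; exact: (dense_orth hip hD hw).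
Qed.
End Main2.

Theorem theorem3p6 (R : realType) (V : lmodType R[i]) (ip : V -> V -> R[i])
  (d : measure_display) (T : measurableType d) (mu : {measure set T -> \bar R})
  (K Kadj Kdag : V -> V) (F G : T -> V) :
  is_hilbert ip -> hseparable ip ->
  bounded_op ip K -> closed_range ip K ->
  is_adjoint ip K Kadj -> is_MP_inverse ip K Kdag ->
  parseval_cKframe ip mu Kadj F ->
  dual_cKBessel ip mu K F G ->
  ({ae mu, forall w, G w = Kdag (F w)} <->
   (forall Q : T -> V, dual_cKBessel ip mu K F Q ->
      forall f g : V, TstarT_form ip mu G G f g = TstarT_form ip mu G Q f g)).
Proof.
move=> [hip hc] [D hD] hK _ hadj hMP hP hG.
have hb : bounded_op ip Kdag by case: hMP.
have [Kd hKd] := adjoint_ex hip hc hb.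
split.
  move=> hae Q hQ f g.
  by rewrite (FW hip hP hKd hG.1.1 hae hG) (FW hip hP hKd hG.1.1 hae hQ).
move=> H; exact: (conv hip hK hadj hMP hP hKd hD hG H).
Qed.
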